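(* In a state estimation (SE) or parameter-state estimation (PS) problem, fix data $y_k$ and let $P_{k-1},Q_{k-1}\in\bar{\mathcal{P}}_k(\bar{\mathcal{X}})\cap\mathcal{P}_1(\bar{\mathcal{X}})$. Let $P_k^-,Q_k^-$ be the probability measures on $\bar{\mathcal{X}}$ with Lebesgue densities: in SE, $p_k^-(x)=\mathbb{E}_{X\sim P_{k-1}}[T_k(x,X)]$, $q_k^-(x)=\mathbb{E}_{X\sim Q_{k-1}}[T_k(x,X)]$; in PS, $p_k^-(x,w)=\int_{\mathcal{X}}T_k(x,x_{k-1},w)p_{k-1}(x_{k-1},w)dx_{k-1}$, $q_k^-(x,w)=\int_{\mathcal{X}}T_k(x,x_{k-1},w)q_{k-1}(x_{k-1},w)dx_{k-1}$, where $p_{k-1},q_{k-1}$ are the Lebesgue densities of $P_{k-1},Q_{k-1}$. Assume $$\mathbb{E}_{(\bar X,\bar X')\sim P_k^-\otimes Q_k^-}[d_{\bar{\mathcal{X}}}(\bar X,\bar X')h_k(y_k,\bar X)h_k(y_k,\bar X')]\le\Big(\int_{\bar{\mathcal{X}}}h_k(y_k,\bar x)d\bar x\Big)^2\mathbb{E}_{(\bar X,\bar X')\sim P_k^-\otimes Q_k^-}[d_{\bar{\mathcal{X}}}(\bar X,\bar X')],$$ $$\mathbb{E}_{(\bar X,\bar X')\sim P_k^-\otimes Q_k^-}[d_{\bar{\mathcal{X}}}(\bar X,\bar X')]\le\sup_{\bar x_0\in\bar{\mathcal{X}}}\Big|\mathbb{E}_{\bar X\sim P_{k-1}}[d_{\bar{\mathcal{X}}}(\bar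 X,\bar x_0)]-\mathbb{E}_{\bar X\sim Q_{k-1}}[d_{\bar{\mathcal{X}}}(\bar X,\bar x_0)]\Big|,$$ and $$\Big(\int_{\bar{\mathcal{X}}}h_k(y_k,\bar x)d\bar x\Big)^2\le\mathbb{E}_{\bar X\sim P_k^-}[h_k(y_k,\bar X)]\,\mathbb{E}_{\bar X\sim Q_k^-}[h_k(y_k,\bar X)].$$ Then $P_k=F_k(P_{k-1})$ and $Q_k^*=F_k(Q_{k-1})$ satisfy $W_1(P_k,Q_k^* )\le W_1(P_{k-1},Q_{k-1})$.
   Context: $(\mathcal{X},d_{\mathcal{X}})$ (SE) or $(\mathcal{X}\times\mathcal{W},d_{\mathcal{X}\times\mathcal{W}})$ (PS) is a Polish metric space, written $(\bar{\mathcal{X}},d_{\bar{\mathcal{X}}})$; $dx,dw$ denote Lebesgue measure, $\lambda$ Lebesgue measure on $\mathcal{X}\times\mathcal{W}$. SE: Markov model with transition density $T_k(x_k,x_{k-1})$ (density in $x_k$) and observation density $h_k(y_k,x_k)$; $\tilde F_k\mu(dx)=h_k(y_k,x)(\int T_k(x,x')\mu(dx'))dx$. PS: transition density $T_k(x_k,x_{k-1},w)$ and observation density $h_k(y_k,x_k,w)$ (for PS, $h_k(y_k,\bar x)$ means $h_k(y_k,x,w)$ at $\bar x=(x,w)$); for $\mu\ll\lambda$ with density $\pi$, $\tilde F_k\mu(dx,dw)=h_k(y_k,x,w)(\int T_k(x,x',w)\pi(x',w)dx')dxdw$. Evidence $Z_k(\mu)=\tilde F_k\mu(\bar{\mathcal{X}})$,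 posterior $F_k\mu=\tilde F_k\mu/Z_k(\mu)$. Admissible priors $\bar{\mathcal{P}}_k(\bar{\mathcal{X}})$: SE: probability measures with $\int T_k(x_k,x')\mu(dx')<\infty$ for all $x_k$ and $0<Z_k(\mu)<\infty$; PS: $\mu\ll\lambda$, $\int T_k(x_k,x',w)\pi(x',w)dx'<\infty$ for all $x_k,w$, $0<Z_k(\mu)<\infty$. $\mathcal{P}_1$: probability measures with finite first moment; $W_1$: 1-Wasserstein distance; $\otimes$: product measure. *)

(* Defs.v *)
From HB Require Import structures.
From mathcomp Require Import all_boot all_order all_algebra.
From mathcomp Require Import all_classical all_reals all_analysis.
Set Implicit Arguments. Unset Strict Implicit. Unset Printing Implicit Defensive.
Import Order.TTheory GRing.Theory Num.Theory.
Local Open Scope classical_set_scope.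
Local Open Scope ring_scope.

Section Generic.
Context {R : realType} {dS : measure_display} {S : measurableType dS}.

Definition is_metric (d : S -> S -> R) : Prop :=
  [/\ (forall x y, 0 <= d x y),
      (forall x y, d x y = 0 <-> x = y),
      (forall x y, d x y = d y x) &
      (forall x y z, d x z <= d x y + d y z)].

Definition coupling (mu nu : set S -> \bar R) (pi : probability (S * S)%type R)
  : Prop :=
  (forall A, measurable A -> pi (A `*` setT) = mu A) /\
  (forall B, measurable B -> pi (setT `*` B) = nu B).

Definition W1 (d : S -> S -> R) (mu nu : set S -> \bar R) : \bar R :=
  ereal_inf [set (\int[pi]_z (d z.1 z.2)%:E)%E | pi in coupling mu nu].

Definition finite_first_moment (d : S -> S -> R) (mu : set S -> \bar R) : Prop :=
  exists x0 : S, (\int[mu]_x (d x x0)%:E < +oo)%E.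

Definition dens_meas (lam : set S -> \bar R) (f : S -> \bar R) : set S -> \bar R :=
  fun A => (\int[lam]_(z in A) f z)%E.

(* unnormalized posterior: (F~ mu)(A) = int_A h(z) pm(z) lam(dz), where pm is
   the prior-predictive density (int T(z,.) dmu in SE) *)
Definition unnorm_post (lam : set S -> \bar R) (hy : S -> R) (pm : S -> \bar R)
  : set S -> \bar R := fun A => (\int[lam]_(z in A) ((hy z)%:E * pm z))%E.

Definition evidence (lam : set S -> \bar R) (hy : S -> R) (pm : S -> \bar R) : \bar R :=
  unnorm_post lam hy pm setT.

Definition posterior (lam : set S -> \bar R) (hy : S -> R) (pm : S -> \bar R)
  : set S -> \bar R :=
  fun A => (unnorm_post lam hy pm A * ((fine (evidence lam hy pm))^-1)%:E)%E.

End Generic.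

Section SE.
Context {R : realType} {dX : measure_display} {X : measurableType dX}.

Definition pred_SE (T : X -> X -> R) (mu : set X -> \bar R) : X -> \bar R :=
  fun x => (\int[mu]_x' (T x x')%:E)%E.

(* admissible priors \bar P_k(X) in SE (mu a probability measure) *)
Definition admissible_SE (lam : set X -> \bar R) (T : X -> X -> R) (hy : X -> R)
  (mu : set X -> \bar R) : Prop :=
  (forall x, (pred_SE T mu x < +oo)%E) /\
  (0 < evidence lam hy (pred_SE T mu) < +oo)%E.
End SE.

Section PS.
Context {R : realType} {dX dW : measure_display}
  {X : measurableType dX} {W : measurableType dW}.

Definition pred_PS (lamX : set X -> \bar R) (T : X -> X -> W -> R)
  (p : X * W -> R) : X * W -> \bar R :=
  fun z => (\int[lamX]_x' (T z.1 x' z.2 * p (x', z.2))%:E)%E.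

Definition is_density (lam : set (X * W) -> \bar R) (mu : set (X * W) -> \bar R)
  (p : X * W -> R) : Prop :=
  (forall z, 0 <= p z) /\ measurable_fun setT p /\
  (forall A, measurable A -> mu A = (\int[lam]_(z in A) (p z)%:E)%E).

Definition admissible_PS (lamX : set X -> \bar R) (lam : set (X * W) -> \bar R)
  (T : X -> X -> W -> R) (hy : X * W -> R) (mu : set (X * W) -> \bar R)
  (p : X * W -> R) : Prop :=
  is_density lam mu p /\
  (forall z, (pred_PS lamX T p z < +oo)%E) /\
  (0 < evidence lam hy (pred_PS lamX T p) < +oo)%E.
End PS.

(* Main.v *)
Require Import Defs.
From HB Require Import structures.
From mathcomp Require Import all_boot all_order all_algebra.
From mathcomp Require Import all_classical all_reals all_analysis.
Import Order.TTheory GRing.Theory Num.Theory.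
Local Open Scope classical_set_scope.
Local Open Scope ring_scope.
From mathcomp Require Import measurable_realfun.
From mathcomp Require Import ring lra.
Set Implicit Arguments. Unset Strict Implicit. Unset Printing Implicit Defensive.
Definition dm d (T : measurableType d) (R : realType)
  (mu : {sigma_finite_measure set T -> \bar R}) (g : T -> \bar R)
  (g0 : forall x, (0 <= g x)%E) (mg : measurable_fun setT g)
  (gfin : forall x, g x \is a fin_num) : set T -> \bar R := dens_meas mu g.

Section dm_inst.
Local Open Scope ereal_scope.
Context d (T : measurableType d) (R : realType)
  (mu : {sigma_finite_measure set T -> \bar R}) (g : T -> \bar R)
  (g0 : forall x, (0 <= g x)%E) (mg : measurable_fun setT g)
  (gfin : forall x, g x \is a fin_num).

Local Notation nu := (dm mu g0 mg gfin).

Let nu0 : nu set0 = 0.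
Proof. by rewrite /dm /dens_meas integral_set0. Qed.

Let nu_ge0 A : 0 <= nu A.
Proof. by apply: integral_ge0 => x _; exact: g0. Qed.

Let nu_sa : semi_sigma_additive nu.
Proof. exact: semi_sigma_additive_nng_induced. Qed.

HB.instance Definition _ := isMeasure.Build _ _ _ nu nu0 nu_ge0 nu_sa.

Let nu_sf : sigma_finite setT nu.
Proof.
have /sigma_finiteP[F [TF ndF Foo]] := sigma_finiteT mu.
exists (fun n => F n `&` [set x | g x <= n%:R%:E]).
  apply/seteqP; split => // x _.
  have [k _ Fkx] : (\bigcup_i F i) x by rewrite -TF.
  have gx := gfin x; have [m hm] : exists m : nat, (fine (g x) <= m%:R)%R.
    exists (Num.Def.archi_bound (fine (g x))); apply/ltW.
    exact: archi_boundP (fine_ge0 (g0 x)).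
  exists (maxn k m) => //; split.
    by move: x Fkx {hm gx}; apply/subsetPset/ndF/leq_maxl.
  rewrite /= -(fineK gx) lee_fin (le_trans hm)// ler_nat leq_maxr//.
move=> n; have [mF Fn] := Foo n.
have mG : measurable (F n `&` [set x | g x <= n%:R%:E]).
  apply: measurableI => //.
  rewrite -[X in measurable X]setTI.
  exact: emeasurable_fun_infty_c.
split => //.
rewrite /= /dm /dens_meas.
apply: (le_lt_trans (@ge0_le_integral _ _ _ mu _ mG g (fun=> n%:R%:E) _ _ _ _)).
- by move=> x _; exact: g0.
- exact: measurable_funTS.
- exact: measurable_cst.
- by move=> x; rewrite /setI /= => -[].
rewrite integral_cst// lte_mul_pinfty//.
apply: (le_lt_trans _ Fn); apply: le_measure => //; rewrite inE//.
Qed.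

HB.instance Definition _ := Measure_isSigmaFinite.Build _ _ _ nu nu_sf.

End dm_inst.

Section dm_integral.
Local Open Scope ereal_scope.
Context d (T : measurableType d) (R : realType)
  (mu : {sigma_finite_measure set T -> \bar R}) (g : T -> \bar R)
  (g0 : forall x, (0 <= g x)%E) (mg : measurable_fun setT g)
  (gfin : forall x, g x \is a fin_num).

Local Notation nu := (dm mu g0 mg gfin).

Import HBNNSimple.

Lemma dm_integral (f : T -> \bar R) : (forall x, 0 <= f x) ->
  measurable_fun setT f ->
  \int[nu]_x f x = \int[mu]_x (f x * g x).
Proof.
move=> f0 mf.
pose h := nnsfun_approx measurableT mf.
have -> : \int[nu]_x f x =
    lim (\int[nu]_x (EFin \o h n) x @[n --> \oo]).
  have fE x : f x = lim ((EFin \o h n) x @[n --> \oo]).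
    by apply/esym/cvg_lim => //; exact: cvg_nnsfun_approx.
  under eq_integral => x _ do rewrite fE.
  apply: monotone_convergence => //.
  - move=> n; apply/measurable_EFinP.
    by apply: (measurable_funS measurableT) => //; exact/measurable_funP.
  - by move=> n x Ex //=; rewrite lee_fin.
  - by move=> x Ex a b ab; rewrite lee_fin; exact/lefP/nd_nnsfun_approx.
have -> : \int[mu]_x (f x * g x) =
    lim (\int[mu]_x ((EFin \o h n) \* g) x @[n --> \oo]).
  have fg x : f x * g x = lim (((EFin \o h n) \* g) x @[n --> \oo]).
    by apply/esym/cvg_lim => //; apply: cvgeZr;
      [exact: gfin|exact: cvg_nnsfun_approx].
  under eq_integral => x _ do rewrite fg.
  apply: monotone_convergence => [//| | |].
  - move=> n; apply/emeasurable_funM => //.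
    exact/measurable_EFinP.
  - by move=> n x Ex /=; rewrite mule_ge0 ?lee_fin.
  - by move=> x Ex a b ab/=; rewrite lee_wpmul2r ?lee_fin//; exact/lefP/nd_nnsfun_approx.
suff suf n : \int[mu]_x ((EFin \o h n) \* g) x =
    \int[nu]_x (EFin \o h n) x.
  have -> : (fun n => \int[mu]_x ((EFin \o h n) x * g x)) = (fun n => \int[nu]_x (EFin \o h n) x) by apply/funext => n; exact: suf.
  by [].
transitivity (\int[nu]_x
   (\sum_(y \in range (h n)) (y * \1_(h n @^-1` [set y]) x)%:E)); last first.
  by apply: eq_integral => t tE; rewrite /= fimfunE -fsumEFin.
have indich m r : measurable_fun setT (fun x => (r * \1_(h m @^-1` [set r]) x)%:E).
  by apply: (measurable_comp measurableT) => //; exact: measurable_funM.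
rewrite ge0_integral_fsum//; last by move=> m y Ey; exact: nnfun_muleindic_ge0.
transitivity (\int[mu]_x (\sum_(y \in range (h n))
    (y * \1_(h n @^-1` [set y]) x)%:E * g x)).
  under [RHS]eq_integral => x xE.
    rewrite -ge0_mule_fsuml => [|y]; last exact: nnfun_muleindic_ge0.
    rewrite fsumEFin // -(fimfunE _ x); over.
  by [].
rewrite ge0_integral_fsum//; last 2 first.
  - move=> y; apply: emeasurable_funM => //.
  - by move=> m y Ey; rewrite mule_ge0// nnfun_muleindic_ge0.
apply: eq_fsbigr => r rhn.
under [RHS]eq_integral do rewrite EFinM.
rewrite integralZl_indic_nnsfun => //.
under eq_integral do rewrite EFinM -muleA.
rewrite ge0_integralZl//.
- under eq_integral do rewrite muleC.
  rewrite (eq_integral (g \_ (h n @^-1` [set r]))); last first.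
    by move=> x xE; rewrite epatch_indic.
  rewrite -integral_mkcondr integral_indic// setIT setTI.
  by rewrite /dm /dens_meas.
- apply: emeasurable_funM; first exact/measurable_EFinP.
  exact: mg.
- by move=> t Et; rewrite mule_ge0 ?lee_fin.
- by move: rhn; rewrite inE => -[t _ <-]; rewrite lee_fin.
Qed.

End dm_integral.

Section marginals.
Local Open Scope ereal_scope.
Context d (S : measurableType d) (R : realType).

Lemma marg1 (P Q : probability S R) (pi : probability (S * S)%type R)
  (f : S -> \bar R) : coupling P Q pi -> (forall x, 0 <= f x) ->
  measurable_fun setT f ->
  \int[pi]_z f z.1 = \int[P]_x f x.
Proof.
move=> [c1 c2] f0 mf.
have mfst : measurable_fun setT (@fst S S) by exact: measurable_fst.
transitivity (\int[pushforward pi fst]_x f x); last first.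
  apply: eq_measure_integral => A mA _.
  rewrite /pushforward; transitivity (pi (A `*` setT)); last exact: c1.
  congr (pi _).
  by apply/seteqP; split => [[x y]|[x y]] /=; [move=> ?; split|move=> []].
by rewrite ge0_integral_pushforward// ?preimage_setT.
Qed.

Lemma marg2 (P Q : probability S R) (pi : probability (S * S)%type R)
  (f : S -> \bar R) : coupling P Q pi -> (forall x, 0 <= f x) ->
  measurable_fun setT f ->
  \int[pi]_z f z.2 = \int[Q]_x f x.
Proof.
move=> [c1 c2] f0 mf.
have msnd : measurable_fun setT (@snd S S) by exact: measurable_snd.
transitivity (\int[pushforward pi snd]_x f x); last first.
  apply: eq_measure_integral => A mA _.
  rewrite /pushforward; transitivity (pi (setT `*` A)); last exact: c2.
  congr (pi _).
  by apply/seteqP; split => [[x y]|[x y]] /=; [move=> ?; split|move=> []].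
by rewrite ge0_integral_pushforward// ?preimage_setT.
Qed.

End marginals.

Section supW1.
Local Open Scope ereal_scope.
Context d (S : measurableType d) (R : realType) (dd : S -> S -> R).
Hypotheses (hd : is_metric dd)
  (mdd : measurable_fun setT (fun z : S * S => dd z.1 z.2)).

Lemma mdd1 x0 : measurable_fun setT (fun x => dd x x0).
Proof. exact: (measurableT_comp mdd (pair2_measurable x0)). Qed.

Lemma mdd2 x0 : measurable_fun setT (fun x => dd x0 x).
Proof. exact: (measurableT_comp mdd (pair1_measurable x0)). Qed.

Lemma fm_all (P : probability S R) : finite_first_moment dd P ->
  forall x0, \int[P]_x (dd x x0)%:E < +oo.
Proof.
case: hd => d0 _ _ dtri [x1 h1] x0.
apply: (@le_lt_trans _ _ (\int[P]_x ((dd x x1)%:E + (dd x1 x0)%:E))).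
  apply: ge0_le_integral => //.
  - by move=> x _; rewrite lee_fin.
  - exact/measurable_EFinP/mdd1.
  - apply: emeasurable_funD; first exact/measurable_EFinP/mdd1.
    exact: measurable_cst.
  - by move=> x _; rewrite -EFinD lee_fin.
rewrite ge0_integralD//.
- rewrite integral_cst//.
  rewrite lte_add_pinfty// lte_mul_pinfty// ?lee_fin//.
  by apply: (le_lt_trans (probability_le1 P measurableT)); exact: ltry.
- by move=> x _; rewrite lee_fin.
- exact/measurable_EFinP/mdd1.
- by move=> x _; rewrite lee_fin.
Qed.

Lemma sup_le_W1 (P Q : probability S R) :
  finite_first_moment dd P -> finite_first_moment dd Q ->
  ereal_sup [set `| \int[P]_x (dd x x0)%:E - \int[Q]_x (dd x x0)%:E |
            | x0 in [set: S]] <= W1 dd P Q.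
Proof.
move=> fP fQ.
case: (hd) => d0 _ dsym dtri.
apply/ereal_supP => _ [x0 _ <-].
apply/ereal_infP => _ [pi cpl <-].
have mf : measurable_fun setT (fun x => (dd x x0)%:E).
  exact/measurable_EFinP/mdd1.
have f0 : forall x, 0 <= (dd x x0)%:E by move=> x; rewrite lee_fin.
rewrite -(marg1 cpl f0 mf) -(marg2 cpl f0 mf).
have mD : measurable_fun setT (fun z : S * S => (dd z.1 z.2)%:E).
  exact/measurable_EFinP.
have m1 : measurable_fun setT (fun z : S * S => (dd z.1 x0)%:E).
  exact: (measurableT_comp mf measurable_fst).
have m2 : measurable_fun setT (fun z : S * S => (dd z.2 x0)%:E).
  exact: (measurableT_comp mf measurable_snd).
have ineq1 : \int[pi]_z (dd z.1 x0)%:E <=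
    \int[pi]_z (dd z.1 z.2)%:E + \int[pi]_z (dd z.2 x0)%:E.
  rewrite -ge0_integralD //; try by move=> z _; rewrite lee_fin.
  apply: ge0_le_integral => //; try by move=> z _; rewrite lee_fin.
  all: try exact: emeasurable_funD.
have ineq2 : \int[pi]_z (dd z.2 x0)%:E <=
    \int[pi]_z (dd z.1 z.2)%:E + \int[pi]_z (dd z.1 x0)%:E.
  rewrite -ge0_integralD //; try by move=> z _; rewrite lee_fin.
  apply: ge0_le_integral => //; try by move=> z _; rewrite lee_fin.
  all: try exact: emeasurable_funD.
  all: try by move=> z _; rewrite -EFinD lee_fin (dsym z.1 z.2).
have fa : \int[pi]_z (dd z.1 x0)%:E \is a fin_num.
  rewrite (marg1 cpl f0 mf) ge0_fin_numE ?fm_all//.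
  by apply: integral_ge0 => x _.
have fb : \int[pi]_z (dd z.2 x0)%:E \is a fin_num.
  rewrite (marg2 cpl f0 mf) ge0_fin_numE ?fm_all//.
  by apply: integral_ge0 => x _.
move: ineq1 ineq2 fa fb.
set a := \int[pi]_z (dd z.1 x0)%:E.
set b := \int[pi]_z (dd z.2 x0)%:E.
set D := \int[pi]_z (dd z.1 z.2)%:E.
have D0 : 0 <= D by apply: integral_ge0 => z _; rewrite lee_fin.
move: D0; case: D => [D| |] //= D0 i1 i2.
- move: a b i1 i2 => [a| |] [b| |] //= i1 i2 _ _.
  rewrite -!EFinD !lee_fin in i1 i2; rewrite lee_fin.
  by rewrite ler_norml; apply/andP; split; lra.
- by move=> _ _; rewrite leey.
Qed.

End supW1.

Section post.
Local Open Scope ereal_scope.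
Context d (S : measurableType d) (R : realType)
  (lam : {sigma_finite_measure set S -> \bar R}) (hy : S -> R).
Hypotheses (mhy : measurable_fun setT hy) (hy0 : forall x, (0 <= hy x)%R).

Definition ghp (pm : S -> \bar R) := fun x => (hy x)%:E * pm x.
Definition gpc (pm : S -> \bar R) :=
  fun x => ghp pm x * ((fine (evidence lam hy pm))^-1)%:E.

Variables (pm : S -> \bar R) (pm0 : forall x, 0 <= pm x)
  (mpm : measurable_fun setT pm) (pmfin : forall x, pm x \is a fin_num)
  (hZ : 0 < evidence lam hy pm < +oo).

Lemma ghp0 : forall x, 0 <= ghp pm x.
Proof. by move=> x; rewrite mule_ge0 ?lee_fin. Qed.

Lemma mghp : measurable_fun setT (ghp pm).
Proof. by apply: emeasurable_funM => //; exact/measurable_EFinP. Qed.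

Lemma ghpfin : forall x, ghp pm x \is a fin_num.
Proof. by move=> x; rewrite fin_numM. Qed.

Lemma c0 : (0 <= (fine (evidence lam hy pm))^-1)%R.
Proof. by rewrite invr_ge0 fine_ge0// ltW//; case/andP: hZ. Qed.

Lemma gpc0 : forall x, 0 <= gpc pm x.
Proof. by move=> x; rewrite mule_ge0 ?lee_fin ?c0 ?ghp0. Qed.

Lemma mgpc : measurable_fun setT (gpc pm).
Proof. by apply: emeasurable_funM => //; exact: mghp. Qed.

Lemma gpcfin : forall x, gpc pm x \is a fin_num.
Proof. by move=> x; rewrite fin_numM// ghpfin. Qed.

Lemma post_eq (P0 : probability S R) :
  posterior lam hy pm = mnormalize (dm lam ghp0 mghp ghpfin) P0.
Proof.
apply/funext => U; rewrite /mnormalize /=.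
case: ifPn => [|_]; last by [].
case/andP: hZ => Z0 Zoo.
rewrite /dm /dens_meas /evidence /unnorm_post /ghp in Z0 Zoo *.
by move=> /orP[/eqP Z|/eqP Z]; rewrite Z ?ltxx in Z0 Zoo.
Qed.

Lemma mnorm_eq (P0 : probability S R) A : measurable A ->
  mnormalize (dm lam ghp0 mghp ghpfin) P0 A = dm lam gpc0 mgpc gpcfin A.
Proof.
move=> mA.
rewrite -post_eq /posterior /dm /dens_meas /unnorm_post /gpc.
rewrite ge0_integralZr //.
all: try (by rewrite lee_fin c0).
all: try (by move=> x _; exact: ghp0).
all: try (exact: measurable_funTS mghp).
Qed.

Lemma post_int (P0 : probability S R) (f : S -> \bar R) :
  (forall x, 0 <= f x) -> measurable_fun setT f ->
  \int[posterior lam hy pm]_x f x =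
  ((fine (evidence lam hy pm))^-1)%:E *
    \int[dm lam pm0 mpm pmfin]_x ((hy x)%:E * f x).
Proof.
move=> f0 mf.
rewrite (post_eq P0).
transitivity (\int[dm lam gpc0 mgpc gpcfin]_x f x).
  by apply: eq_measure_integral => A mA _; exact: mnorm_eq.
rewrite !dm_integral//; last 2 first.
  by move=> x; rewrite mule_ge0 ?lee_fin.
  by apply: emeasurable_funM => //; exact/measurable_EFinP.
rewrite -ge0_integralZl//; last 3 first.
  - apply: emeasurable_funM => //; apply: emeasurable_funM => //.
    exact/measurable_EFinP.
  - by move=> x _; rewrite !mule_ge0 ?lee_fin.
  - by rewrite lee_fin c0.
apply: eq_integral => x _.
rewrite /gpc /ghp.
by rewrite [RHS]muleC !muleA [f x * _]muleC.
Qed.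

End post.

Section gen.
Local Open Scope ereal_scope.
Context d (S : measurableType d) (R : realType)
  (lam : {sigma_finite_measure set S -> \bar R}) (dd : S -> S -> R)
  (hy : S -> R) (pm qm : S -> \bar R) (P Q : probability S R).
Hypotheses (hd : is_metric dd)
  (mdd : measurable_fun setT (fun z : S * S => dd z.1 z.2))
  (mhy : measurable_fun setT hy) (hy0 : forall x, (0 <= hy x)%R)
  (pm0 : forall x, 0 <= pm x) (mpm : measurable_fun setT pm)
  (pmfin : forall x, pm x \is a fin_num)
  (qm0 : forall x, 0 <= qm x) (mqm : measurable_fun setT qm)
  (qmfin : forall x, qm x \is a fin_num)
  (hZp : 0 < evidence lam hy pm < +oo) (hZq : 0 < evidence lam hy qm < +oo).

Let Pmm : {sigma_finite_measure set S -> \bar R} := dm lam pm0 mpm pmfin.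
Let Qmm : {sigma_finite_measure set S -> \bar R} := dm lam qm0 mqm qmfin.
Let pP : probability S R := mnormalize (dm lam (ghp0 hy0 pm0) (mghp mhy mpm) (ghpfin hy pmfin)) P.
Let pQ : probability S R := mnormalize (dm lam (ghp0 hy0 qm0) (mghp mhy mqm) (ghpfin hy qmfin)) Q.
Let cp := ((fine (evidence lam hy pm))^-1)%R.
Let cq := ((fine (evidence lam hy qm))^-1)%R.

Let mD : measurable_fun setT (fun z : S * S => (dd z.1 z.2)%:E).
Proof. exact/measurable_EFinP. Qed.

Let D0 z : 0 <= (dd z.1 z.2)%:E.
Proof. by case: hd => h _ _ _; rewrite lee_fin. Qed.

Lemma W1_post_le : W1 dd (posterior lam hy pm) (posterior lam hy qm) <=
  \int[pP \x pQ]_z (dd z.1 z.2)%:E.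
Proof.
rewrite (post_eq mhy hy0 pm0 mpm pmfin hZp P) (post_eq mhy hy0 qm0 mqm qmfin hZq Q).
apply: ereal_inf_lbound; exists (pP \x pQ)%E => //.
split => A mA.
  transitivity (pP A * pQ setT); first exact: product_measure1E.
  by rewrite probability_setT mule1.
transitivity (pP setT * pQ A); first exact: product_measure1E.
by rewrite probability_setT mul1e.
Qed.


Let mG : measurable_fun setT (fun x => \int[Qmm]_y ((hy y)%:E * (dd x y)%:E)).
Proof.
apply: (@measurable_fun_fubini_tonelli_F _ _ S S R Qmm
  (fun z => (hy z.2)%:E * (dd z.1 z.2)%:E)).
  apply: emeasurable_funM; last exact: mD.
  by apply/measurable_EFinP; exact: (measurableT_comp mhy measurable_snd).
by move=> z; apply: mule_ge0; [rewrite lee_fin; exact: hy0|exact: D0].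
Qed.

Let G0 x : 0 <= \int[Qmm]_y ((hy y)%:E * (dd x y)%:E).
Proof.
apply: integral_ge0 => y _; rewrite mule_ge0 ?lee_fin//.
by case: hd.
Qed.

Lemma int_prod : \int[pP \x pQ]_z (dd z.1 z.2)%:E =
  cp%:E * (cq%:E * \int[Pmm \x Qmm]_z (dd z.1 z.2 * hy z.1 * hy z.2)%:E).
Proof.
rewrite [LHS](@fubini_tonelli1 _ _ _ _ _ pP pQ _ mD D0).
have eF x : fubini_F pQ (fun z => (dd z.1 z.2)%:E) x =
    cq%:E * \int[Qmm]_y ((hy y)%:E * (dd x y)%:E).
  rewrite /fubini_F /=.
  transitivity (\int[posterior lam hy qm]_y (dd x y)%:E).
    by rewrite (post_eq mhy hy0 qm0 mqm qmfin hZq Q).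
  apply: (post_int mhy hy0 qm0 mqm qmfin hZq Q).
  - by move=> y; have := D0 (x, y).
  - exact: (measurableT_comp mD (pair1_measurable x)).
transitivity (\int[pP]_x
    (cq%:E * \int[Qmm]_y ((hy y)%:E * (dd x y)%:E))).
  by apply: eq_integral => x _; exact: eF.
transitivity (\int[posterior lam hy pm]_x
    (cq%:E * \int[Qmm]_y ((hy y)%:E * (dd x y)%:E))).
  by rewrite (post_eq mhy hy0 pm0 mpm pmfin hZp P).
rewrite (post_int mhy hy0 pm0 mpm pmfin hZp P); last 2 first.
  - by move=> x; rewrite mule_ge0 ?lee_fin ?c0.
  - exact: measurable_funeM.
congr (_ * _).
have mf3 : measurable_fun setT
    (fun z : S * S => (dd z.1 z.2 * hy z.1 * hy z.2)%:E).
  apply/measurable_EFinP; apply: measurable_funM.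
    apply: measurable_funM => //.
    exact: (measurableT_comp mhy measurable_fst).
  exact: (measurableT_comp mhy measurable_snd).
have f30 : forall z : S * S, 0 <= (dd z.1 z.2 * hy z.1 * hy z.2)%:E.
  by move=> z; rewrite lee_fin !mulr_ge0//; case: hd.
rewrite (@fubini_tonelli1 _ _ _ _ _ Pmm Qmm _ mf3 f30).
rewrite -[RHS]ge0_integralZl//; last 3 first.
  - exact: measurable_fun_fubini_tonelli_F.
  - by move=> x _; apply: integral_ge0 => y _; exact: f30.
  - by rewrite lee_fin c0.
apply: eq_integral => x _.
rewrite muleCA; congr (_ * _).
rewrite /fubini_F -ge0_integralZl//; last 3 first.
  - apply: emeasurable_funM; first exact/measurable_EFinP.
    exact: (measurableT_comp mD (pair1_measurable x)).
  - by move=> y _; rewrite mule_ge0 ?lee_fin//; exact: (D0 (x, y)).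
  - by rewrite lee_fin.
apply: eq_integral => y _; rewrite -!EFinM; congr EFin; rewrite /=; ring.
Qed.

Lemma evE : evidence lam hy pm = \int[Pmm]_x (hy x)%:E.
Proof.
have := dm_integral lam pm0 mpm pmfin (f:=fun x => (hy x)%:E).
move=> E; apply/esym; apply: E; [by move=> x; rewrite lee_fin | exact/measurable_EFinP].
Qed.

Lemma evEq : evidence lam hy qm = \int[Qmm]_x (hy x)%:E.
Proof.
have := dm_integral lam qm0 mqm qmfin (f:=fun x => (hy x)%:E).
move=> E; apply/esym; apply: E; [by move=> x; rewrite lee_fin | exact/measurable_EFinP].
Qed.

Lemma gen_main :
  finite_first_moment dd P -> finite_first_moment dd Q ->
  let Pm := dens_meas lam pm in
  let Qm := dens_meas lam qm in
  (\int[Pm \x Qm]_z (dd z.1 z.2 * hy z.1 * hy z.2)%:E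
      <= (\int[lam]_x (hy x)%:E) ^+ 2 * \int[Pm \x Qm]_z (dd z.1 z.2)%:E)%E ->
  (\int[Pm \x Qm]_z (dd z.1 z.2)%:E
      <= ereal_sup [set `| \int[P]_x (dd x x0)%:E - \int[Q]_x (dd x x0)%:E |
                   | x0 in [set: S]])%E ->
  ((\int[lam]_x (hy x)%:E) ^+ 2
      <= \int[Pm]_x (hy x)%:E * \int[Qm]_x (hy x)%:E)%E ->
  (W1 dd (posterior lam hy pm) (posterior lam hy qm) <= W1 dd P Q)%E.
Proof.
move=> fP fQ Pm Qm H1 H2 H3.
apply: le_trans W1_post_le _; rewrite int_prod.
set A := \int[Pmm \x Qmm]_z (dd z.1 z.2 * hy z.1 * hy z.2)%:E.
set B := \int[Pmm \x Qmm]_z (dd z.1 z.2)%:E.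
set C := (\int[lam]_x (hy x)%:E) ^+ 2.
have H1' : A <= C * B := H1.
have H2' : B <= ereal_sup [set `| \int[P]_x (dd x x0)%:E - \int[Q]_x (dd x x0)%:E |
                   | x0 in [set: S]] := H2.
have H3' : C <= evidence lam hy pm * evidence lam hy qm.
  by rewrite evE evEq; exact: H3.
apply: le_trans (le_trans H2' (sup_le_W1 hd mdd fP fQ)).
have A0 : 0 <= A by apply: integral_ge0 => z _; rewrite lee_fin !mulr_ge0//; case: hd.
have B0 : 0 <= B by apply: integral_ge0 => z _; exact: D0.
have C0 : 0 <= C by exact: sqre_ge0.
case/andP: hZp => Zp0 Zpoo; case/andP: hZq => Zq0 Zqoo.
rewrite /cp /cq.
move: H3' Zp0 Zpoo Zq0 Zqoo.
case: (evidence lam hy pm) => [zp| |] //; case: (evidence lam hy qm) => [zq| |] //.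
move=> H3' zp0 _ zq0 _; rewrite /= in H3' *.
rewrite lte_fin in zp0; rewrite lte_fin in zq0.
have Cfin : C \is a fin_num.
  by rewrite ge0_fin_numE// (le_lt_trans H3')// -EFinM ltry.
move: H1' H3'; rewrite -(fineK Cfin); set c := fine C => H1' H3'.
have c0 : (0 <= c)%R by rewrite fine_ge0.
rewrite -EFinM lee_fin in H3'.
apply: (@le_trans _ _ (zp^-1%:E * (zq^-1%:E * (c%:E * B)))).
  apply: lee_pmul => //; first by rewrite lee_fin invr_ge0 ltW.
    by rewrite mule_ge0// lee_fin invr_ge0 ltW.
  apply: lee_pmul => //; by rewrite lee_fin invr_ge0 ltW.
rewrite !muleA -!EFinM.
have k0 : (0 <= zp^-1 * zq^-1 * c)%R.
  by rewrite !mulr_ge0// invr_ge0 ltW.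
have k1 : (zp^-1 * zq^-1 * c <= 1)%R.
  rewrite -invfM mulrC ler_pdivrMr ?mulr_gt0// mul1r.
  exact: H3'.
clear H1 H2 H1' H2'.
move: B0; case: B => [b| |] // b0.
- rewrite -EFinM lee_fin; rewrite lee_fin in b0.
  by rewrite -[leRHS]mul1r ler_wpM2r.
- by rewrite leey.
Qed.

End gen.

Definition prodm d1 d2 (T1 : measurableType d1) (T2 : measurableType d2)
  (R : realType) (m1 : {sigma_finite_measure set T1 -> \bar R})
  (m2 : {sigma_finite_measure set T2 -> \bar R}) : set (T1 * T2) -> \bar R :=
  (m1 \x m2)%E.

Section prodm_inst.
Local Open Scope ereal_scope.
Context d1 d2 (T1 : measurableType d1) (T2 : measurableType d2) (R : realType).
Variable m1 : {sigma_finite_measure set T1 -> \bar R}.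
Variable m2 : {sigma_finite_measure set T2 -> \bar R}.

HB.instance Definition _ := Measure.copy (prodm m1 m2) (m1 \x m2)%E.

Let prodm_sf : sigma_finite setT (prodm m1 m2).
Proof.
have /sigma_finiteP[F [TF ndF Foo]] := sigma_finiteT m1.
have /sigma_finiteP[G [TG ndG Goo]] := sigma_finiteT m2.
exists (fun n => F n `*` G n).
 rewrite -setXTT TF TG predeqE => -[x y]; split.
    move=> [/= [n _ Fnx] [k _ Gky]]; exists (maxn n k) => //; split.
    - by move: x Fnx; exact/subsetPset/ndF/leq_maxl.
    - by move: y Gky; exact/subsetPset/ndG/leq_maxr.
  by move=> [n _ []/= ? ?]; split; exists n.
move=> k; have [? ?] := Foo k; have [? ?] := Goo k.
split; first exact: measurableX.
by rewrite /prodm product_measure1E// lte_mul_pinfty// ge0_fin_numE.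
Qed.

HB.instance Definition _ := Measure_isSigmaFinite.Build _ _ _ (prodm m1 m2)
  prodm_sf.

End prodm_inst.
Theorem theorem6 :
  (* ===== SE: state estimation ===== *)
  (forall (R : realType) (dX dY : measure_display)
     (X : measurableType dX) (Y : measurableType dY)
     (lam : {sigma_finite_measure set X -> \bar R})   (* "Lebesgue" dx *)
     (muY : {measure set Y -> \bar R})                (* reference measure dy *)
     (d : X -> X -> R) (T : X -> X -> R) (h : Y -> X -> R) (y : Y)
     (P Q : probability X R),
   is_metric d ->
   measurable_fun setT (fun z : X * X => d z.1 z.2) ->
   (* T = T_k is a transition density: T(., x') is a density in x_k *)
   measurable_fun setT (fun z : X * X => T z.1 z.2) ->
   (forall x x', 0 <= T x x') ->
   (forall x', (\int[lam]_x (T x x')%:E = 1)%E) ->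
   (* h = h_k is an observation density (density in y) *)
   measurable_fun setT (fun z : Y * X => h z.1 z.2) ->
   (forall y' x, 0 <= h y' x) ->
   (forall x, (\int[muY]_y' (h y' x)%:E = 1)%E) ->
   (* P_{k-1}, Q_{k-1} in \bar P_k(X) \cap P_1(X) *)
   admissible_SE lam T (h y) P -> admissible_SE lam T (h y) Q ->
   finite_first_moment d P -> finite_first_moment d Q ->
   let pm := pred_SE T P in
   let qm := pred_SE T Q in
   let Pm := dens_meas lam pm in     (* P_k^- *)
   let Qm := dens_meas lam qm in     (* Q_k^- *)
   (\int[Pm \x Qm]_z (d z.1 z.2 * h y z.1 * h y z.2)%:E
      <= (\int[lam]_x (h y x)%:E) ^+ 2 * \int[Pm \x Qm]_z (d z.1 z.2)%:E)%E ->
   (\int[Pm \x Qm]_z (d z.1 z.2)%:E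
      <= ereal_sup [set `| \int[P]_x (d x x0)%:E - \int[Q]_x (d x x0)%:E |
                   | x0 in [set: X]])%E ->
   ((\int[lam]_x (h y x)%:E) ^+ 2
      <= \int[Pm]_x (h y x)%:E * \int[Qm]_x (h y x)%:E)%E ->
   (W1 d (posterior lam (h y) pm) (posterior lam (h y) qm) <= W1 d P Q)%E)
  /\
  (* ===== PS: parameter-state estimation ===== *)
  (forall (R : realType) (dX dW dY : measure_display)
     (X : measurableType dX) (W : measurableType dW) (Y : measurableType dY)
     (lamX : {sigma_finite_measure set X -> \bar R})  (* "Lebesgue" dx *)
     (lamW : {sigma_finite_measure set W -> \bar R})  (* "Lebesgue" dw *)
     (muY : {measure set Y -> \bar R})
     (d : X * W -> X * W -> R) (T : X -> X -> W -> R) (h : Y -> X -> W -> R)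
     (y : Y) (P Q : probability (X * W)%type R) (p q : X * W -> R),
   let lam := (lamX \x lamW)%E in                     (* lambda on X x W *)
   is_metric d ->
   measurable_fun setT (fun z : (X * W) * (X * W) => d z.1 z.2) ->
   (* T = T_k is a transition density (in x_k, for each x_{k-1}, w) *)
   measurable_fun setT (fun z : (X * X) * W => T z.1.1 z.1.2 z.2) ->
   (forall x x' w, 0 <= T x x' w) ->
   (forall x' w, (\int[lamX]_x (T x x' w)%:E = 1)%E) ->
   (* h = h_k is an observation density (density in y) *)
   measurable_fun setT (fun z : Y * (X * W) => h z.1 z.2.1 z.2.2) ->
   (forall y' x w, 0 <= h y' x w) ->
   (forall x w, (\int[muY]_y' (h y' x w)%:E = 1)%E) ->
   let hy := fun z : X * W => h y z.1 z.2 in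
   (* P_{k-1}, Q_{k-1} in \bar P_k(X x W) \cap P_1(X x W), densities p, q *)
   admissible_PS lamX lam T hy P p -> admissible_PS lamX lam T hy Q q ->
   finite_first_moment d P -> finite_first_moment d Q ->
   let pm := pred_PS lamX T p in
   let qm := pred_PS lamX T q in
   let Pm := dens_meas lam pm in     (* P_k^- *)
   let Qm := dens_meas lam qm in     (* Q_k^- *)
   (\int[Pm \x Qm]_z (d z.1 z.2 * hy z.1 * hy z.2)%:E
      <= (\int[lam]_z (hy z)%:E) ^+ 2 * \int[Pm \x Qm]_z (d z.1 z.2)%:E)%E ->
   (\int[Pm \x Qm]_z (d z.1 z.2)%:E
      <= ereal_sup [set `| \int[P]_z (d z z0)%:E - \int[Q]_z (d z z0)%:E |
                   | z0 in [set: X * W]])%E ->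
   ((\int[lam]_z (hy z)%:E) ^+ 2
      <= \int[Pm]_z (hy z)%:E * \int[Qm]_z (hy z)%:E)%E ->
   (W1 d (posterior lam hy pm) (posterior lam hy qm) <= W1 d P Q)%E).
Proof.
split.
- move=> R dX dY X Y lam muY d T h y P Q hd md mT T0 T1 mh h0 h1 aP aQ fP fQ.
  move=> pm qm Pm Qm H1 H2 H3.
  have mhy : measurable_fun setT (h y).
    exact: (measurableT_comp mh (pair1_measurable y)).
  have mpm : forall (M : probability X R),
      measurable_fun setT (pred_SE T M).
    move=> M.
    apply: (@measurable_fun_fubini_tonelli_F _ _ X X R M
      (fun z => (T z.1 z.2)%:E)).
      exact/measurable_EFinP.
    by move=> z; rewrite lee_fin.
  have pm0 : forall (M : probability X R) x, (0 <= pred_SE T M x)%E.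
    by move=> M x; apply: integral_ge0 => x' _; rewrite lee_fin.
  have pmfin : forall (M : probability X R), admissible_SE lam T (h y) M ->
      forall x, pred_SE T M x \is a fin_num.
    by move=> M [f _] x; rewrite ge0_fin_numE// f.
  exact: (@gen_main _ X R lam d (h y) pm qm P Q hd md mhy (h0 y)
    (pm0 P) (mpm P) (pmfin P aP) (pm0 Q) (mpm Q) (pmfin Q aQ)
    aP.2 aQ.2 fP fQ H1 H2 H3).
- move=> R dX dW dY X W Y lamX lamW muY d T h y P Q p q lam.
  move=> hd md mT T0 T1 mh h0 h1 hy aP aQ fP fQ pm qm Pm Qm H1 H2 H3.
  have mhy : measurable_fun setT hy.
    exact: (measurableT_comp mh (pair1_measurable y)).
  have hy0 : forall z, (0 <= hy z)%R by move=> z; exact: h0.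
  have mpm : forall (r : X * W -> R), measurable_fun setT r ->
      (forall z, 0 <= r z)%R -> measurable_fun setT (pred_PS lamX T r).
    move=> r mr r0.
    apply: (@measurable_fun_fubini_tonelli_F _ _ (X * W)%type X R lamX
      (fun u => (T u.1.1 u.2 u.1.2 * r (u.2, u.1.2))%:E)).
      have m11 : measurable_fun setT (fun u : (X * W) * X => u.1.1).
        exact: (measurableT_comp measurable_fst measurable_fst).
      have m12 : measurable_fun setT (fun u : (X * W) * X => u.1.2).
        exact: (measurableT_comp measurable_snd measurable_fst).
      have m2 : measurable_fun setT (fun u : (X * W) * X => u.2).
        exact: measurable_snd.
      have mphi : measurable_fun setT
          (fun u : (X * W) * X => ((u.1.1, u.2), u.1.2)).
        by apply: measurable_fun_pair => //; exact: measurable_fun_pair.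
      have mpsi : measurable_fun setT (fun u : (X * W) * X => (u.2, u.1.2)).
        exact: measurable_fun_pair.
      apply/measurable_EFinP; apply: measurable_funM.
        exact: (measurableT_comp mT mphi).
      exact: (measurableT_comp mr mpsi).
    by move=> u; rewrite lee_fin mulr_ge0.
  have pm0 : forall (r : X * W -> R), (forall z, 0 <= r z)%R ->
      forall z, (0 <= pred_PS lamX T r z)%E.
    by move=> r r0 z; apply: integral_ge0 => x' _; rewrite lee_fin mulr_ge0.
  case: aP => [[p0 [mp _]] [pfin pZ]].
  case: aQ => [[q0 [mq _]] [qfin qZ]].
  have pmfin : forall (r : X * W -> R), (forall z, 0 <= r z)%R ->
      (forall z, (pred_PS lamX T r z < +oo)%E) ->
      forall z, pred_PS lamX T r z \is a fin_num.
    by move=> r r0 f z; rewrite ge0_fin_numE ?f// pm0.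
  have G := (@gen_main _ (X * W)%type R (prodm lamX lamW) d hy pm qm P Q hd md
    mhy hy0 (pm0 p p0) (mpm p mp p0) (pmfin p p0 pfin)).
  have G2 := G (pm0 q q0) (mpm q mq q0) (pmfin q q0 qfin).
  have G3 := G2 pZ qZ fP fQ.
  exact: G3 H1 H2 H3.
Qed.
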